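(* In the setting below, suppose $\|\boldsymbol\Theta^*\|_{2\to\infty}\le C_1$, $\|\mathbf A^*\|_{2\to\infty}\le C_2$, $\|\mathbf A\|_{2\to\infty}\le C_2$, $\sigma_r(\mathcal I_{1,i}(\mathbf A))>0$, and $$\|\mathbf Z_{i\cdot}\mathrm{diag}(\boldsymbol\Omega_{i\cdot})\mathbf A\|+\|\mathbf B_{1,i}(\mathbf A)\|+\beta_{1,i}(\mathbf A)\kappa_3(3C_1C_2)\le\min\Big\{\frac{\sigma_r^2(\mathcal I_{1,i}(\mathbf A))}{4\gamma_{1,i}(\mathbf A)\kappa_3(3C_1C_2)},\ \tfrac12\sigma_r(\mathcal I_{1,i}(\mathbf A))C_1\Big\}$$ (the first term of the minimum read as $+\infty$ if its denominator is $0$). Then there exists $\tilde{\boldsymbol\theta}_i$ with $S_{1,i}(\tilde{\boldsymbol\theta}_i;\mathbf A)=\mathbf 0$ and $$\|\tilde{\boldsymbol\theta}_i-\boldsymbol\theta_i^*\|\le2\sigma_r^{-1}(\mathcal I_{1,i}(\mathbf A))\big\{\|\mathbf Z_{i\cdot}\mathrm{diag}(\boldsymbol\Omega_{i\cdot})\mathbf A\|+\|\mathbf B_{1,i}(\mathbf A)\|+\beta_{1,i}(\mathbf A)\kappa_3(3C_1C_2)\big\},$$ and moreover $\|\tilde{\boldsymbol\theta}_i-\boldsymbol\theta_i^*\|\le C_1$.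
   Context: Deterministic setting: $\phi>0$; $b:\mathbb R\to\mathbb R$ is three times continuously differentiable with $b''>0$; $\boldsymbol\Theta^*\in\mathbb R^{n\times r}$ (rows $\boldsymbol\theta_i^{*T}$), $\mathbf A^*\in\mathbb R^{p\times r}$ (rows $\mathbf a_j^{*T}$), $\mathbf M^*=(m^*_{ij})=\boldsymbol\Theta^*(\mathbf A^* )^T$; $\mathbf A\in\mathbb R^{p\times r}$ with rows $\mathbf a_j^T$; $C_1,C_2>0$; $i\in[n]$ fixed; $y_{ij}\in\mathbb R$ and $\omega_{ij}\in\{0,1\}$ are fixed numbers; $z_{ij}=y_{ij}-b'(m^*_{ij})$, $\mathbf Z_{i\cdot}=(z_{i1},\dots,z_{ip})$, $\mathrm{diag}(\boldsymbol\Omega_{i\cdot})=\mathrm{diag}(\omega_{i1},\dots,\omega_{ip})$. $\kappa_3(\alpha)=\sup_{|x|\le\alpha}|b'''(x)|$. Definitions: $S_{1,i}(\boldsymbol\theta;\mathbf A)=\phi^{-1}\sum_{j=1}^p\omega_{ij}\{y_{ij}-b'(\mathbf a_j^T\boldsymbol\theta)\}\mathbf a_j$; $\mathbf B_{1,i}(\mathbf A)=\sum_{j=1}^p\omega_{ij}b''(m^*_{ij})\mathbf a_j(\mathbf a_j-\mathbf a_j^* )^T\boldsymbol\theta_i^*$; $\mathcal I_{1,i}(\mathbf A)=\sum_{j=1}^p\omega_{ij}b''(m^*_{ij})\mathbf a_j\mathbf a_j^T$; $\beta_{1,i}(\mathbf A)=\sup_{\|\mathbf u\|=1}\sum_j\omega_{ij}((\mathbf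 a_j-\mathbf a_j^* )^T\boldsymbol\theta_i^* )^2|\mathbf a_j^T\mathbf u|$; $\gamma_{1,i}(\mathbf A)=\sup_{\|\mathbf u\|=1}\sum_j\omega_{ij}|\mathbf a_j^T\mathbf u|^3$. $\sigma_r(\cdot)$ is the $r$-th largest singular value; $\|X\|_{2\to\infty}$ the maximal row Euclidean norm. *)

(* Defs.v *)
From mathcomp Require Import all_boot all_order all_algebra.
From mathcomp Require Import all_classical all_reals all_analysis.
Set Implicit Arguments. Unset Strict Implicit. Unset Printing Implicit Defensive.
Import Order.TTheory GRing.Theory Num.Theory.
Import numFieldNormedType.Exports.
Local Open Scope classical_set_scope.
Local Open Scope ring_scope.

Section Defs.
Variable R : realType.

Definition vnorm (r : nat) (v : 'rV[R]_r) : R := Num.sqrt (\sum_(k < r) v 0 k ^+ 2).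

Definition dotv (r : nat) (a u : 'rV[R]_r) : R := (a *m u^T) 0 0.

Definition norm2inf (m r : nat) (X : 'M[R]_(m, r)) : R :=
  \big[Num.max/0]_(j < m) vnorm (row j X).

(* sigma_r(M) for an r x r matrix: the r-th largest (= smallest) singular value,
   via the variational characterization min_{||u||=1} ||u M|| *)
Definition sigma_r (r : nat) (M : 'M[R]_r) : R :=
  inf [set y | exists u : 'rV[R]_r, vnorm u = 1 /\ y = vnorm (u *m M)].

Definition kappa3 (b3 : R -> R) (alpha : R) : R :=
  sup [set y | exists x : R, `|x| <= alpha /\ y = `|b3 x|].

Definition Mstar (n p r : nat) (Thetas : 'M[R]_(n, r)) (As : 'M[R]_(p, r)) : 'M[R]_(n, p) :=
  Thetas *m As^T.

Definition Zmat (n p r : nat) (b1 : R -> R) (y : 'M[R]_(n, p))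
  (Thetas : 'M[R]_(n, r)) (As : 'M[R]_(p, r)) : 'M[R]_(n, p) :=
  \matrix_(i, j) (y i j - b1 (Mstar Thetas As i j)).

Definition Omat (n p : nat) (om : 'I_n -> 'I_p -> bool) : 'M[R]_(n, p) :=
  \matrix_(i, j) (om i j)%:R.

Definition ZOA (n p r : nat) (b1 : R -> R) (y : 'M[R]_(n, p)) (om : 'I_n -> 'I_p -> bool)
  (Thetas : 'M[R]_(n, r)) (As A : 'M[R]_(p, r)) (i : 'I_n) : 'rV[R]_r :=
  row i (Zmat b1 y Thetas As) *m diag_mx (row i (Omat om)) *m A.

Definition S1 (n p r : nat) (phi : R) (b1 : R -> R) (y : 'M[R]_(n, p))
  (om : 'I_n -> 'I_p -> bool) (i : 'I_n) (theta : 'rV[R]_r) (A : 'M[R]_(p, r)) : 'rV[R]_r :=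
  phi^-1 *: \sum_(j < p) ((om i j)%:R * (y i j - b1 (dotv (row j A) theta))) *: row j A.

Definition B1 (n p r : nat) (b2 : R -> R) (om : 'I_n -> 'I_p -> bool)
  (Thetas : 'M[R]_(n, r)) (As A : 'M[R]_(p, r)) (i : 'I_n) : 'rV[R]_r :=
  \sum_(j < p) ((om i j)%:R * b2 (Mstar Thetas As i j)
                 * dotv (row j A - row j As) (row i Thetas)) *: row j A.

Definition I1 (n p r : nat) (b2 : R -> R) (om : 'I_n -> 'I_p -> bool)
  (Thetas : 'M[R]_(n, r)) (As A : 'M[R]_(p, r)) (i : 'I_n) : 'M[R]_r :=
  \sum_(j < p) ((om i j)%:R * b2 (Mstar Thetas As i j)) *: ((row j A)^T *m row j A).

Definition beta1 (n p r : nat) (om : 'I_n -> 'I_p -> bool)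
  (Thetas : 'M[R]_(n, r)) (As A : 'M[R]_(p, r)) (i : 'I_n) : R :=
  sup [set y | exists u : 'rV[R]_r, vnorm u = 1 /\
        y = \sum_(j < p) (om i j)%:R * (dotv (row j A - row j As) (row i Thetas)) ^+ 2
                          * `|dotv (row j A) u|].

Definition gamma1 (n p r : nat) (om : 'I_n -> 'I_p -> bool)
  (A : 'M[R]_(p, r)) (i : 'I_n) : R :=
  sup [set y | exists u : 'rV[R]_r, vnorm u = 1 /\
        y = \sum_(j < p) (om i j)%:R * `|dotv (row j A) u| ^+ 3].

End Defs.

(* Main.v *)
Require Import Defs.
From mathcomp Require Import all_boot all_order all_algebra.
From mathcomp Require Import all_classical all_reals all_analysis.
From mathcomp Require Import ring lra.
Set Implicit Arguments. Unset Strict Implicit.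
Import Order.TTheory GRing.Theory Num.Theory.
Import numFieldNormedType.Exports.
Local Open Scope classical_set_scope.
Local Open Scope ring_scope.

Section Vec.
Variable R : realType.
Variable r : nat.
Implicit Types a u v w : 'rV[R]_r.

Definition dp a u : R := \sum_(k < r) a 0 k * u 0 k.
Definition sq u : R := dp u u.

Lemma dotvE a u : dotv a u = dp a u.
Proof. by rewrite /dotv /dp mxE; apply: eq_bigr => k _; rewrite mxE. Qed.

Lemma dpC a u : dp a u = dp u a.
Proof. by apply: eq_bigr => k _; rewrite mulrC. Qed.

Lemma dpDr a u v : dp a (u + v) = dp a u + dp a v.
Proof. by rewrite /dp -big_split; apply: eq_bigr => k _; rewrite mxE mulrDr. Qed.

Lemma dpDl a u v : dp (u + v) a = dp u a + dp v a.
Proof. by rewrite dpC dpDr !(dpC a). Qed.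

Lemma dpZr a c u : dp a (c *: u) = c * dp a u.
Proof. by rewrite /dp mulr_sumr; apply: eq_bigr => k _; rewrite mxE mulrCA. Qed.

Lemma dpZl a c u : dp (c *: u) a = c * dp u a.
Proof. by rewrite dpC dpZr dpC. Qed.

Lemma dpNr a u : dp a (- u) = - dp a u.
Proof. by rewrite -scaleN1r dpZr mulN1r. Qed.

Lemma dpNl a u : dp (- u) a = - dp u a.
Proof. by rewrite dpC dpNr dpC. Qed.

Lemma dpBr a u v : dp a (u - v) = dp a u - dp a v.
Proof. by rewrite dpDr dpNr. Qed.

Lemma dpBl a u v : dp (u - v) a = dp u a - dp v a.
Proof. by rewrite dpDl dpNl. Qed.

Lemma dp0r a : dp a 0 = 0.
Proof. by rewrite /dp big1 // => k _; rewrite mxE mulr0. Qed.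

Lemma dp_suml (p : nat) (f : 'I_p -> R) (g : 'I_p -> 'rV[R]_r) w :
  dp (\sum_(j < p) f j *: g j) w = \sum_(j < p) f j * dp (g j) w.
Proof.
rewrite /dp; under eq_bigr => k _ do rewrite summxE mulr_suml.
rewrite exchange_big /=; apply: eq_bigr => j _; rewrite mulr_sumr.
by apply: eq_bigr => k _; rewrite mxE mulrA.
Qed.

Lemma sq_ge0 u : 0 <= sq u.
Proof. by apply: sumr_ge0 => k _; rewrite -expr2 sqr_ge0. Qed.

Lemma sq_le0 u : sq u <= 0 -> u = 0.
Proof.
move=> h; apply/rowP => k; rewrite mxE.
have : u 0 k * u 0 k <= sq u.
  rewrite /sq /dp (bigD1 k) //= lerDl; apply: sumr_ge0 => l _.
  by rewrite -expr2 sqr_ge0.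
move=> h2; have : u 0 k ^+ 2 <= 0 by rewrite expr2; exact: le_trans h2 h.
by rewrite -[_ <= 0]/(_ <= 0) => h3; apply/eqP; rewrite -sqrf_eq0 eq_le h3 sqr_ge0.
Qed.

Lemma vnormE u : vnorm u = Num.sqrt (sq u).
Proof. by rewrite /vnorm /sq /dp; congr Num.sqrt; apply: eq_bigr => k _; rewrite expr2. Qed.

Lemma vnorm_ge0 u : 0 <= vnorm u.
Proof. by rewrite vnormE sqrtr_ge0. Qed.

Lemma vnorm_sq u : vnorm u ^+ 2 = sq u.
Proof. by rewrite vnormE sqr_sqrtr // sq_ge0. Qed.

Lemma CS a u : `|dp a u| <= vnorm a * vnorm u.
Proof.
have [u0|unz] := eqVneq (sq u) 0.
  have -> : u = 0 by apply: sq_le0; rewrite u0.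
  by rewrite dp0r normr0 mulr_ge0 // vnorm_ge0.
have su : 0 < sq u by rewrite lt_def unz sq_ge0.
have key : dp a u ^+ 2 <= sq a * sq u.
  pose t := - (dp a u / sq u).
  have h := sq_ge0 (a + t *: u).
  rewrite /sq dpDl !dpDr !dpZl !dpZr (dpC u a) in h.
  rewrite /t in h.
  have e : dp a a + - (dp a u / sq u) * dp a u +
     (- (dp a u / sq u) * dp a u + - (dp a u / sq u) * (- (dp a u / sq u) * dp u u))
     = dp a a - dp a u ^+ 2 / sq u.
    rewrite /sq; field; by rewrite -/(sq u).
  rewrite e subr_ge0 ler_pdivrMr // in h.
rewrite -(@ler_pXn2r _ 2) // ?nnegrE ?mulr_ge0 ?vnorm_ge0 //.
by rewrite exprMn !vnorm_sq real_normK // num_real.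
Qed.

Lemma vnormZ c u : vnorm (c *: u) = `|c| * vnorm u.
Proof.
rewrite !vnormE /sq dpZl dpZr mulrA -expr2 sqrtrM ?sqr_ge0 //.
by rewrite sqrtr_sqr.
Qed.

End Vec.
Section Real.
Variable R : realType.

Lemma deriv_cont (f df : R -> R) :
  (forall t, is_derive t (1:R) f (df t)) -> continuous f.
Proof.
move=> hd t; apply: differentiable_continuous.
by apply/derivable1_diffP; have := hd t => -[].
Qed.

Lemma mvt (f df : R -> R) a b :
  (forall t, is_derive t (1:R) f (df t)) -> a <= b ->
  exists c, [/\ a <= c, c <= b & f b - f a = df c * (b - a)].
Proof.
move=> hd ab.
have [c cab e] := @MVT_segment R f df a b ab (fun x _ => hd x)
  (continuous_subspaceT (deriv_cont hd)).
by exists c; split => //; move: cab; rewrite in_itv /= => /andP[].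
Qed.

Lemma cont_bounded (f : R -> R) (al : R) : continuous f ->
  exists K, 0 <= K /\ forall t, `|t| <= al -> `|f t| <= K.
Proof.
move=> cf.
have [al0|al0] := leP 0 al; last first.
  exists 0; split => // t ht; have := normr_ge0 t; lra.
have nab : - al <= al by lra.
have cnf : continuous (fun t => `|f t|).
  by move=> t; apply: continuous_comp; [exact: cf| exact: norm_continuous].
have [c cin hc] := EVT_max nab (continuous_subspaceT cnf).
exists `|f c|; split => // t ht; apply: hc.
by rewrite in_itv /= -ler_norml.
Qed.

End Real.
Section Taylor.
Variable R : realType.

Lemma taylor2 (f f1 f2 : R -> R) (K al x m : R) :
 (forall t, is_derive t (1:R) f (f1 t)) -> (forall t, is_derive t (1:R) f1 (f2 t)) ->
 (forall t, `|t| <= al -> `|f2 t| <= K) -> `|x| <= al -> `|m| <= al ->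
 `|f x - f m - f1 m * (x - m)| <= K / 2 * (x - m) ^+ 2.
Proof.
move=> hf hf1 hK hx hm.
have sE : forall a b : R, a *: b = a * b by [].
move: (hx) (hm); rewrite !ler_norml => /andP[hx1 hx2] /andP[hm1 hm2].
have btw c : (m <= c <= x) || (x <= c <= m) -> `|c| <= al.
  by rewrite ler_norml => /orP[/andP[h1 h2]|/andP[h1 h2]]; apply/andP; split; lra.
have K0 : 0 <= K by apply: le_trans (hK m hm); exact: normr_ge0.
have lip c : (m <= c <= x) || (x <= c <= m) ->
    - (K * `|c - m|) <= f1 c - f1 m <= K * `|c - m|.
  move=> hc; rewrite -ler_norml.
  have [cm|cm] := leP m c.
    have [d [d1 d2 ->]] := mvt hf1 cm.
    rewrite normrM ler_wpM2r //; apply: hK; apply: btw.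
    by move: hc => /orP[/andP[h1 h2]|/andP[h1 h2]]; apply/orP; [left|right]; apply/andP; split; lra.
  have [d [d1 d2 e]] := mvt hf1 (ltW cm).
  have -> : f1 c - f1 m = - (f1 m - f1 c) by rewrite opprB.
  rewrite e normrN normrM (distrC c m) ler_wpM2r //; apply: hK; apply: btw.
  by move: hc => /orP[/andP[h1 h2]|/andP[h1 h2]]; apply/orP; [left|right]; apply/andP; split; lra.
pose g t := f t - f m - f1 m * (t - m) - K / 2 * (t - m) ^+ 2.
pose h t := f t - f m - f1 m * (t - m) + K / 2 * (t - m) ^+ 2.
have hg t : is_derive t (1:R) g (f1 t - f1 m - K * (t - m)).
  by apply: is_derive_eq; rewrite !sE; lra.
have hh t : is_derive t (1:R) h (f1 t - f1 m + K * (t - m)).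
  by apply: is_derive_eq; rewrite !sE; lra.
have gm : g m = 0 by rewrite /g !subrr expr2 !mulr0; lra.
have hm0 : h m = 0 by rewrite /h !subrr expr2 !mulr0; lra.
suff [g0 h0] : g x <= 0 /\ 0 <= h x.
  apply/andP; split; rewrite /g /h in g0 h0; lra.
have [mx|mx] := leP m x.
  have [c [c1 c2 ec]] := mvt hg mx.
  have [d [d1 d2 ed]] := mvt hh mx.
  have := lip c; rewrite c1 c2 /= => /(_ isT) /andP[l1 l2].
  have := lip d; rewrite d1 d2 /= => /(_ isT) /andP[l3 l4].
  rewrite (ger0_norm (_ : 0 <= c - m)) in l1 l2; last lra.
  rewrite (ger0_norm (_ : 0 <= d - m)) in l3 l4; last lra.
  rewrite gm subr0 in ec; rewrite hm0 subr0 in ed.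
  rewrite ec ed; split; nra.
have [c [c1 c2 ec]] := mvt hg (ltW mx).
have [d [d1 d2 ed]] := mvt hh (ltW mx).
have := lip c; rewrite c1 c2 orbT => /(_ isT) /andP[l1 l2].
have := lip d; rewrite d1 d2 orbT => /(_ isT) /andP[l3 l4].
rewrite (ler0_norm (_ : c - m <= 0)) in l1 l2; last lra.
rewrite (ler0_norm (_ : d - m <= 0)) in l3 l4; last lra.
rewrite gm in ec; rewrite hm0 in ed.
have e1 : g x = - ((f1 c - f1 m - K * (c - m)) * (m - x)) by lra.
have e2 : h x = - ((f1 d - f1 m + K * (d - m)) * (m - x)) by lra.
rewrite e1 e2; split; nra.
Qed.

End Taylor.
Section Topo.
Variable R : realType.
Variable r : nat.

Lemma cont_sum p (F : 'I_p -> 'rV[R]_r -> R) :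
  (forall j, continuous (F j)) -> continuous (fun x => \sum_(j < p) F j x).
Proof.
move=> hF; apply: continuous_big; [exact: add_continuous| by move=> j _; exact: hF].
Qed.

Lemma cont_mul (F G : 'rV[R]_r -> R) :
  continuous F -> continuous G -> continuous (fun x => F x * G x).
Proof. by move=> hF hG x; apply: (continuousM (s:=F) (t:=G)); [exact: hF|exact: hG]. Qed.

Lemma cont_add (F G : 'rV[R]_r -> R) :
  continuous F -> continuous G -> continuous (fun x => F x + G x).
Proof. by move=> hF hG x; apply: (continuousD (f:=F) (g:=G)); [exact: hF|exact: hG]. Qed.

Lemma cont_opp (F : 'rV[R]_r -> R) :
  continuous F -> continuous (fun x => - F x).
Proof. by move=> hF x; apply: (continuousN (f:=F)); exact: hF. Qed.

Lemma cont_cst (c : R) : continuous (fun _ : 'rV[R]_r => c).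
Proof. by move=> x; apply: cst_continuous. Qed.

Lemma cont_coord k : continuous (fun x : 'rV[R]_r => x 0 k).
Proof. exact: coord_continuous. Qed.

Lemma cont_dp (a : 'rV[R]_r) : continuous (fun x => dp a x).
Proof.
apply: cont_sum => k; apply: cont_mul; [exact: cont_cst| exact: cont_coord].
Qed.

Lemma cont_sqB (c : 'rV[R]_r) : continuous (fun x : 'rV[R]_r => sq (x - c)).
Proof.
rewrite /sq /dp; apply: cont_sum => k.
have e : (fun x : 'rV[R]_r => (x - c) 0 k * (x - c) 0 k) =
   (fun x => (x 0 k + - c 0 k) * (x 0 k + - c 0 k)).
  by apply: funext => x; rewrite !mxE.
rewrite e; apply: cont_mul; apply: cont_add;
  (exact: cont_coord || exact: cont_cst).
Qed.

Lemma coord_le_sq (v : 'rV[R]_r) k : v 0 k ^+ 2 <= sq v.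
Proof.
rewrite /sq /dp (bigD1 k) //= expr2 lerDl; apply: sumr_ge0 => l _.
by rewrite -expr2 sqr_ge0.
Qed.

Lemma ball_compact (c : 'rV[R]_r) (rho : R) :
  compact [set x | sq (x - c) <= rho ^+ 2].
Proof.
apply: (@subclosed_compact _ _
   [set v : 'rV[R]_r | forall k, `[c 0 k - `|rho|, c 0 k + `|rho|]%classic (v ord0 k)]).
- have h := proj1 (continuous_closedP _) (cont_sqB (c:=c)) _ (@closed_le R (rho ^+ 2)).
  exact: h.
- apply: (rV_compact (A := fun k => `[c 0 k - `|rho|, c 0 k + `|rho|]%classic)) => k.
  exact: segment_compact.
- move=> x /= hx k; rewrite /= in_itv /=.
  have h := le_trans (coord_le_sq (x - c) k) hx.
  have : `|(x - c) 0 k| <= `|rho|.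
    rewrite -(@ler_pXn2r _ 2) // ?nnegrE ?normr_ge0 //.
    by rewrite !real_normK ?num_real.
  rewrite !mxE ler_norml => /andP[h1 h2]; have -> : x ord0 k = x 0 k by []. apply/andP; split; lra.
Qed.

Lemma sphere_compact : compact [set x : 'rV[R]_r | sq x = 1].
Proof.
apply: (@subclosed_compact _ _ [set x | sq (x - 0) <= 1 ^+ 2]).
- have e : [set x : 'rV[R]_r | sq x = 1] = (fun x => sq (x - 0)) @^-1` [set x | x = 1].
    by apply: funext => x; rewrite /= subr0.
  rewrite e; apply: (proj1 (continuous_closedP _) (cont_sqB (c:=0))).
  exact: closed_eq.
- exact: ball_compact.
- by move=> x /= hx; rewrite subr0 hx expr1n.
Qed.

End Topo.
Section Ray.
Variable R : realType.
Variable r : nat.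

Lemma quad0 (al be : R) : (forall t, 0 <= al * t + be * t ^+ 2) -> al = 0.
Proof.
move=> h.
pose D := `|be| + 1.
have D0 : 0 < D by rewrite /D; have := normr_ge0 be; lra.
pose t := - al / D.
have tD : t * D = - al by rewrite /t mulrAC -mulrA divff ?mulr1 // gt_eqF.
have hb : be <= `|be| := ler_norm be.
have := h t => h1.
have h2 : 0 <= D ^+ 2 * (al * t + be * t ^+ 2) by rewrite mulr_ge0 // sqr_ge0.
have e : D ^+ 2 * (al * t + be * t ^+ 2) = al * D * (t * D) + be * (t * D) ^+ 2.
  by ring.
rewrite e tD in h2.
have : al ^+ 2 <= 0 by rewrite /D in h2; nra.
by move=> h3; apply/eqP; rewrite -sqrf_eq0 eq_le h3 sqr_ge0.
Qed.

Lemma mulmx_M (p : nat) (c : 'I_p -> R) (a : 'I_p -> 'rV[R]_r) (u : 'rV[R]_r) :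
  u *m (\sum_(j < p) c j *: ((a j)^T *m a j)) =
  \sum_(j < p) (c j * dp (a j) u) *: a j.
Proof.
apply/rowP => k; rewrite !mxE summxE.
under eq_bigr => l _ do rewrite summxE mulr_sumr.
rewrite exchange_big /=; apply: eq_bigr => j _.
rewrite !mxE /dp mulr_sumr mulr_suml; apply: eq_bigr => l _.
rewrite !mxE big_ord1 !mxE; ring.
Qed.

End Ray.
Section Ray2.
Variable R : realType.
Variable r : nat.

Lemma vnorm1 (u : 'rV[R]_r) : (vnorm u = 1) <-> (sq u = 1).
Proof.
split => h.
  by rewrite -vnorm_sq h expr1n.
by rewrite vnormE h sqrtr1.
Qed.

Lemma rayleigh (p : nat) (c : 'I_p -> R) (a : 'I_p -> 'rV[R]_r) :
  (forall j, 0 <= c j) ->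
  0 < sigma_r (\sum_(j < p) c j *: ((a j)^T *m a j)) ->
  forall d, sigma_r (\sum_(j < p) c j *: ((a j)^T *m a j)) * sq d
            <= \sum_(j < p) c j * dp (a j) d ^+ 2.
Proof.
move=> c0 s0.
set M := \sum_(j < p) c j *: ((a j)^T *m a j).
set Q := fun d : 'rV[R]_r => \sum_(j < p) c j * dp (a j) d ^+ 2.
have Q0 d : 0 <= Q d by apply: sumr_ge0 => j _; rewrite mulr_ge0 // sqr_ge0.
have [u1 hu1] : exists u : 'rV[R]_r, sq u = 1.
  case: (pselect (exists u : 'rV[R]_r, vnorm u = 1)) => [[u hu]|hn].
    by exists u; apply/vnorm1.
  exfalso; move: s0; rewrite /sigma_r.
  have -> : [set y | exists u : 'rV[R]_r, vnorm u = 1 /\ y = vnorm (u *m M)] = set0.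
    by apply/seteqP; split => // z [u [hu _]]; apply: hn; exists u.
  by rewrite inf0 ltxx.
have cQ : continuous Q.
  apply: cont_sum => j; apply: cont_mul; first exact: cont_cst.
  by apply: cont_mul; exact: cont_dp.
have ne : [set x : 'rV[R]_r | sq x = 1] !=set0 by exists u1.
have [u0 u0in u0min] := EVT_min_rV ne (@sphere_compact R r)
   (continuous_subspaceT cQ).
have su0 : sq u0 = 1 by move: u0in; rewrite inE.
set q := Q u0.
have QZ k d : Q (k *: d) = k ^+ 2 * Q d.
  rewrite /Q mulr_sumr; apply: eq_bigr => j _; rewrite dpZr; ring.
have hom d : q * sq d <= Q d.
  have [sd0|sdn] := eqVneq (sq d) 0.
    by rewrite sd0 mulr0.
  have sdp : 0 < sq d by rewrite lt_def sdn sq_ge0.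
  pose s := Num.sqrt (sq d).
  have s0' : 0 < s by rewrite sqrtr_gt0.
  have ss : s ^+ 2 = sq d by rewrite sqr_sqrtr // sq_ge0.
  have h1 : sq (s^-1 *: d) = 1.
    rewrite /sq dpZl dpZr mulrA -expr2 -/(sq d) -ss exprVn mulVf //.
    by rewrite expf_neq0 // gt_eqF.
  have := u0min (s^-1 *: d); rewrite inE => /(_ h1).
  rewrite QZ -/q exprVn => h2.
  rewrite -ss; rewrite ler_pdivlMl in h2; last by rewrite exprn_gt0.
  by rewrite mulrC.
have bil v : \sum_(j < p) c j * dp (a j) u0 * dp (a j) v = q * dp u0 v.
  set B := \sum_(j < p) _.
  have e t : Q (u0 + t *: v) = q + 2 * t * B + t ^+ 2 * Q v.
    rewrite /q /Q /B mulr_sumr mulr_sumr -!big_split /=.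
    apply: eq_bigr => j _; rewrite dpDr dpZr; ring.
  have e2 t : sq (u0 + t *: v) = 1 + 2 * t * dp u0 v + t ^+ 2 * sq v.
    rewrite /sq !dpDl !dpDr !dpZl !dpZr (dpC v u0) -/(sq u0) su0; ring.
  have := @quad0 R (2 * (B - q * dp u0 v)) (Q v - q * sq v).
  have H t : 0 <= 2 * (B - q * dp u0 v) * t + (Q v - q * sq v) * t ^+ 2.
    have := hom (u0 + t *: v); rewrite e e2 => h.
    have ee : 2 * (B - q * dp u0 v) * t + (Q v - q * sq v) * t ^+ 2 =
      (q + 2 * t * B + t ^+ 2 * Q v) - q * (1 + 2 * t * dp u0 v + t ^+ 2 * sq v) by ring.
    by rewrite ee subr_ge0.
  move=> /(_ H) h; have : B - q * dp u0 v = 0 by lra.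
  by move/eqP; rewrite subr_eq0 => /eqP.
have eig : u0 *m M = q *: u0.
  pose v := u0 *m M - q *: u0.
  have h1 : dp (u0 *m M) v = \sum_(j < p) c j * dp (a j) u0 * dp (a j) v.
    rewrite mulmx_M dp_suml; apply: eq_bigr => j _; ring.
  have : v = 0.
    apply: sq_le0; rewrite /sq {1}/v dpBl dpZl h1 bil subrr //.
  by move/eqP; rewrite subr_eq0 => /eqP.
have vq : vnorm (u0 *m M) = q.
  rewrite eig vnormZ ger0_norm ?Q0 //.
  by have := proj2 (vnorm1 u0) su0 => ->; rewrite mulr1.
have sq_le : sigma_r M <= q.
  rewrite /sigma_r.
  have hlb : has_lbound [set y | exists u : 'rV[R]_r, vnorm u = 1 /\ y = vnorm (u *m M)].
    by exists 0 => z [u [_ ->]]; exact: vnorm_ge0.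
  apply: (ge_inf hlb); exists u0; split => //.
  exact/vnorm1.
move=> d; apply: le_trans (hom d).
by rewrite ler_wpM2r // sq_ge0.
Qed.

End Ray2.
Section HomSup.
Variable R : realType.
Variable r : nat.

Lemma sup_ge0 (E : set R) : (forall y, E y -> 0 <= y) -> has_ubound E -> 0 <= sup E.
Proof.
move=> h hub; case: (pselect (E !=set0)) => [[x Ex]|hn].
  exact: le_trans (h _ Ex) (ub_le_sup hub Ex).
have -> : E = set0.
  by apply/seteqP; split => // x Ex; apply: hn; exists x.
by rewrite sup0.
Qed.

Lemma hom_sup (G : 'rV[R]_r -> R) (m : nat) : G 0 = 0 ->
  (forall k u, 0 < k -> G (k *: u) = k ^+ m.+1 * G u) ->
  has_ubound [set y | exists u, vnorm u = 1 /\ y = G u] ->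
  forall u, G u <= sup [set y | exists u, vnorm u = 1 /\ y = G u] * vnorm u ^+ m.+1.
Proof.
move=> G0 GZ hub u.
have [nu0|nun] := eqVneq (vnorm u) 0.
  have u0 : u = 0.
    apply: sq_le0; rewrite -vnorm_sq nu0 expr0n //.
  by move: nu0; rewrite u0 => nu0; rewrite G0 nu0 expr0n /= mulr0.
have nup : 0 < vnorm u by rewrite lt_def nun vnorm_ge0.
have h1 : vnorm ((vnorm u)^-1 *: u) = 1.
  by rewrite vnormZ ger0_norm ?invr_ge0 ?vnorm_ge0 // mulVf.
have := ub_le_sup hub (ex_intro _ _ (conj h1 erefl)).
rewrite GZ ?invr_gt0 // exprVn => h2.
by rewrite -ler_pdivrMr ?exprn_gt0 // mulrC.
Qed.

Lemma le_sum_term (p : nat) (F : 'I_p -> R) j : (forall k, 0 <= F k) -> F j <= \sum_(k < p) F k.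
Proof.
move=> h; rewrite (bigD1 j) //= lerDl; apply: sumr_ge0 => k _; exact: h.
Qed.

Lemma smallt (a b c : R) : 0 <= b -> 0 <= c -> (0 < c \/ a < 0) ->
  exists t1, 0 < t1 /\ forall t, 0 < t -> t <= t1 -> a * t + b * t ^+ 2 <= c.
Proof.
move=> b0 c0 hac.
have [a0|a0] := ltP a 0.
  exists (- a / (b + 1)); split.
    by rewrite divr_gt0 //; lra.
  move=> t t0 tt1.
  have tb : t * (b + 1) <= - a by rewrite -ler_pdivlMr //; lra.
  have : t * (a + b * t) <= 0 by rewrite pmulr_rle0 //; nra.
  move=> h; apply: le_trans _ c0; rewrite expr2; nra.
case: hac => [cpos|]; last by move=> h; exfalso; lra.
exists (Num.min 1 (c / (a + b + 1))); split.
  rewrite lt_min ltr01 /= divr_gt0 //; lra.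
move=> t t0; rewrite le_min => /andP[t1 t2].
have h2 : t ^+ 2 <= t by rewrite expr2 ler_piMl // ltW.
have h3 : t * (a + b + 1) <= c by rewrite -ler_pdivlMr //; lra.
have : b * t ^+ 2 <= b * t by rewrite ler_wpM2l.
nra.
Qed.

End HomSup.
Section Main.
Variables (R : realType) (n p r : nat) (phi : R) (b b1 b2 b3 : R -> R)
  (Thetas : 'M[R]_(n, r)) (As A : 'M[R]_(p, r)) (C1 C2 : R) (i : 'I_n)
  (y : 'M[R]_(n, p)) (om : 'I_n -> 'I_p -> bool).
Hypotheses (hb : forall x : R, is_derive x (1 : R) b (b1 x))
  (hb1 : forall x : R, is_derive x (1 : R) b1 (b2 x))
  (hb2 : forall x : R, is_derive x (1 : R) b2 (b3 x))
  (cb3 : continuous b3) (b2pos : forall x, 0 < b2 x)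
  (C1p : 0 < C1) (C2p : 0 < C2)
  (nT : norm2inf Thetas <= C1) (nAs : norm2inf As <= C2) (nA : norm2inf A <= C2).

Let ts := row i Thetas.
Let aj (j : 'I_p) := row j A.
Let asj (j : 'I_p) := row j As.
Let w (j : 'I_p) : R := (om i j)%:R.
Let mst (j : 'I_p) := Mstar Thetas As i j.
Let e (j : 'I_p) := dp (aj j - asj j) ts.
Let z (j : 'I_p) := y i j - b1 (mst j).
Let cc (j : 'I_p) := w j * b2 (mst j).
Definition sv (th : 'rV[R]_r) : 'rV[R]_r :=
  \sum_(j < p) (w j * (y i j - b1 (dp (aj j) th))) *: aj j.
Let kap := kappa3 b3 (3 * C1 * C2).

Lemma w_ge0 j : 0 <= w j.
Proof. by rewrite /w ler0n. Qed.

Lemma cc_ge0 j : 0 <= cc j.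
Proof. by rewrite /cc mulr_ge0 ?w_ge0 // ltW. Qed.

Lemma mstE j : mst j = dp (asj j) ts.
Proof.
rewrite /mst /Mstar /dp mxE; apply: eq_bigr => k _.
by rewrite !mxE mulrC.
Qed.

Lemma row_le (m : nat) (X : 'M[R]_(m, r)) j : vnorm (row j X) <= norm2inf X.
Proof. exact: le_bigmax. Qed.

Lemma ts_le : vnorm ts <= C1.
Proof. exact: le_trans (row_le _ _) nT. Qed.
Lemma aj_le j : vnorm (aj j) <= C2.
Proof. exact: le_trans (row_le _ _) nA. Qed.
Lemma asj_le j : vnorm (asj j) <= C2.
Proof. exact: le_trans (row_le _ _) nAs. Qed.

Lemma dpa_le j (v : 'rV[R]_r) : `|dp (aj j) v| <= C2 * vnorm v.
Proof.
apply: le_trans (CS _ _) _; rewrite ler_wpM2r ?vnorm_ge0 //; exact: aj_le.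
Qed.

Lemma mst_le j : `|mst j| <= C1 * C2.
Proof.
rewrite mstE; apply: le_trans (CS _ _) _; rewrite [C1 * C2]mulrC.
apply: ler_pM; rewrite ?vnorm_ge0 //; [exact: asj_le| exact: ts_le].
Qed.

Lemma kap_prop : 0 <= kap /\ forall t, `|t| <= 3 * C1 * C2 -> `|b3 t| <= kap.
Proof.
have [K [K0 hK]] := cont_bounded (3 * C1 * C2) cb3.
have hub : has_ubound [set y | exists x : R, `|x| <= 3 * C1 * C2 /\ y = `|b3 x|].
  by exists K => _ [x [hx ->]]; exact: hK.
have H t : `|t| <= 3 * C1 * C2 -> `|b3 t| <= kap.
  by move=> ht; apply: (ub_le_sup hub); exists t.
split => //; apply: le_trans (H 0 _); first exact: normr_ge0.
by rewrite normr0 !mulr_ge0 // ltW.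
Qed.


Lemma beta_facts : 0 <= beta1 om Thetas As A i /\ forall u,
  \sum_(j < p) w j * e j ^+ 2 * `|dp (aj j) u| <= beta1 om Thetas As A i * vnorm u.
Proof.
pose G := fun u : 'rV[R]_r => \sum_(j < p) (om i j)%:R *
   (dotv (row j A - row j As) (row i Thetas)) ^+ 2 * `|dotv (row j A) u|.
have G0 : G 0 = 0.
  by rewrite /G big1 // => j _; rewrite !dotvE dp0r normr0 mulr0.
have GZ k u : 0 < k -> G (k *: u) = k ^+ 1 * G u.
  move=> k0; rewrite /G mulr_sumr; apply: eq_bigr => j _.
  by rewrite !dotvE dpZr normrM gtr0_norm // expr1 mulrCA.
have Gge0 u : 0 <= G u.
  apply: sumr_ge0 => j _; apply: mulr_ge0; [apply: mulr_ge0|]; by rewrite ?ler0n ?sqr_ge0 ?normr_ge0.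
have hub : has_ubound [set y | exists u, vnorm u = 1 /\ y = G u].
  exists (\sum_(j < p) w j * e j ^+ 2 * C2) => _ [u [hu ->]].
  apply: ler_sum => j _; rewrite !dotvE; apply: ler_wpM2l.
    by apply: mulr_ge0; rewrite ?ler0n ?sqr_ge0.
  by have := dpa_le j u; rewrite hu mulr1.
have hs := @hom_sup R r G 0 G0 GZ hub.
split.
  by apply: sup_ge0 hub => _ [u [_ ->]].
move=> u; have := hs u; rewrite expr1 => h.
apply: le_trans h; rewrite le_eqVlt; apply/orP; left; apply/eqP.
by rewrite /G; apply: eq_bigr => j _; rewrite !dotvE.
Qed.

Lemma gamma_facts : 0 <= gamma1 om A i /\ forall u,
  \sum_(j < p) w j * `|dp (aj j) u| ^+ 3 <= gamma1 om A i * vnorm u ^+ 3.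
Proof.
pose G := fun u : 'rV[R]_r => \sum_(j < p) (om i j)%:R * `|dotv (row j A) u| ^+ 3.
have G0 : G 0 = 0.
  by rewrite /G big1 // => j _; rewrite !dotvE dp0r normr0 expr0n mulr0.
have GZ k u : 0 < k -> G (k *: u) = k ^+ 3 * G u.
  move=> k0; rewrite /G mulr_sumr; apply: eq_bigr => j _.
  by rewrite !dotvE dpZr normrM gtr0_norm // exprMn mulrCA.
have Gge0 u : 0 <= G u.
  apply: sumr_ge0 => j _; apply: mulr_ge0; by rewrite ?ler0n ?exprn_ge0 ?normr_ge0.
have hub : has_ubound [set y | exists u, vnorm u = 1 /\ y = G u].
  exists (\sum_(j < p) w j * C2 ^+ 3) => _ [u [hu ->]].
  apply: ler_sum => j _; rewrite !dotvE; apply: ler_wpM2l; first by rewrite ler0n.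
  rewrite lerXn2r ?nnegrE ?normr_ge0 ?(ltW C2p) //.
  by have := dpa_le j u; rewrite hu mulr1.
have hs := @hom_sup R r G 2 G0 GZ hub.
split.
  by apply: sup_ge0 hub => _ [u [_ ->]].
move=> u; have := hs u => h.
apply: le_trans h; rewrite le_eqVlt; apply/orP; left; apply/eqP.
by rewrite /G; apply: eq_bigr => j _; rewrite !dotvE.
Qed.

Lemma ZOA_E : ZOA b1 y om Thetas As A i = \sum_(j < p) (z j * w j) *: aj j.
Proof.
rewrite /ZOA mulmx_sum_row; apply: eq_bigr => j _.
by rewrite mul_mx_diag /z /w /mst /Mstar !mxE.
Qed.

Lemma B1_E : B1 b2 om Thetas As A i = \sum_(j < p) (cc j * e j) *: aj j.
Proof. by rewrite /B1; apply: eq_bigr => j _; rewrite dotvE. Qed.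

Lemma S1_E th : S1 phi b1 y om i th A = phi^-1 *: sv th.
Proof.
rewrite /S1 /sv; congr (_ *: _); apply: eq_bigr => j _.
by rewrite dotvE.
Qed.

Lemma est (d v : 'rV[R]_r) : vnorm d <= C1 ->
  dp (sv (ts + d)) v <=
  (vnorm (ZOA b1 y om Thetas As A i) + vnorm (B1 b2 om Thetas As A i)) * vnorm v
  - \sum_(j < p) cc j * dp (aj j) d * dp (aj j) v
  + kap * \sum_(j < p) w j * (dp (aj j) d ^+ 2 + e j ^+ 2) * `|dp (aj j) v|.
Proof.
move=> hd.
have [kap0 hkap] := kap_prop.
have hZ : dp (ZOA b1 y om Thetas As A i) v = \sum_(j < p) z j * w j * dp (aj j) v.
  by rewrite ZOA_E dp_suml.
have hB : dp (B1 b2 om Thetas As A i) v = \sum_(j < p) cc j * e j * dp (aj j) v.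
  by rewrite B1_E dp_suml.
have term j : w j * (y i j - b1 (dp (aj j) (ts + d))) * dp (aj j) v <=
    z j * w j * dp (aj j) v - cc j * e j * dp (aj j) v
    - cc j * dp (aj j) d * dp (aj j) v
    + kap * (w j * (dp (aj j) d ^+ 2 + e j ^+ 2) * `|dp (aj j) v|).
  set h := dp (aj j) d; set g := dp (aj j) v.
  set x := dp (aj j) (ts + d); set m := mst j.
  have xm : x - m = h + e j.
    by rewrite /x /m mstE /e dpDr dpBl /h; ring.
  have hx : `|x| <= 3 * C1 * C2.
    rewrite /x dpDr; apply: le_trans (ler_normD _ _) _.
    have h1 := dpa_le j ts; have h2 := dpa_le j d.
    have := ts_le; have := vnorm_ge0 d => ? ?.
    have : C2 * vnorm ts <= C2 * C1 by rewrite ler_wpM2l // ltW.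
    have : C2 * vnorm d <= C2 * C1 by rewrite ler_wpM2l // ltW.
    have : 0 <= C1 * C2 by rewrite mulr_ge0 // ltW.
    nra.
  have hm : `|m| <= 3 * C1 * C2.
    apply: le_trans (mst_le j) _.
    have : 0 <= C1 * C2 by rewrite mulr_ge0 // ltW.
    nra.
  have tay := taylor2 hb1 hb2 hkap hx hm.
  rewrite xm in tay.
  set rr := b1 x - b1 m - b2 m * (h + e j) in tay.
  have t1 : - (rr * g) <= `|rr| * `|g|.
    by rewrite -normrM; apply: le_trans (ler_norm _) _; rewrite normrN.
  have t2 : `|rr| * `|g| <= kap / 2 * (h + e j) ^+ 2 * `|g|.
    by rewrite ler_wpM2r ?normr_ge0.
  have t3 : kap / 2 * (h + e j) ^+ 2 <= kap * (h ^+ 2 + e j ^+ 2).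
    have : (h + e j) ^+ 2 <= 2 * (h ^+ 2 + e j ^+ 2).
      have := sqr_ge0 (h - e j); rewrite !expr2 => ?; nra.
    move=> hh; rewrite -mulrA ler_wpM2l // ler_pdivrMl //; lra.
  have t4 : - (rr * g) <= kap * (h ^+ 2 + e j ^+ 2) * `|g|.
    apply: le_trans t1 _; apply: le_trans t2 _.
    by rewrite ler_wpM2r ?normr_ge0.
  have t5 : w j * (- (rr * g)) <= w j * (kap * (h ^+ 2 + e j ^+ 2) * `|g|).
    by rewrite ler_wpM2l ?w_ge0.
  have ide : w j * (y i j - b1 x) * g = z j * w j * g - cc j * e j * g - cc j * h * g
      + w j * (- (rr * g)).
    rewrite /rr /cc /z /m; ring.
  rewrite ide; have -> : kap * (w j * (h ^+ 2 + e j ^+ 2) * `|g|) =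
     w j * (kap * (h ^+ 2 + e j ^+ 2) * `|g|) by ring.
  by rewrite lerD2l.
rewrite /sv dp_suml.
apply: le_trans (ler_sum _ (fun j _ => term j)) _.
rewrite !big_split /= !sumrN -mulr_sumr -hZ -hB.
have c1 : dp (ZOA b1 y om Thetas As A i) v <= vnorm (ZOA b1 y om Thetas As A i) * vnorm v.
  by apply: le_trans (ler_norm _) _; exact: CS.
have c2 : - dp (B1 b2 om Thetas As A i) v <= vnorm (B1 b2 om Thetas As A i) * vnorm v.
  by apply: le_trans (ler_norm _) _; rewrite normrN; exact: CS.
rewrite mulrDl; lra.
Qed.

Let Lv := vnorm (ZOA b1 y om Thetas As A i) + vnorm (B1 b2 om Thetas As A i)
           + beta1 om Thetas As A i * kap.

Lemma vnorm0 : vnorm (0 : 'rV[R]_r) = 0.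
Proof. by rewrite vnormE /sq dp0r sqrtr0. Qed.

Lemma zero_est v : dp (sv ts) v <= Lv * vnorm v.
Proof.
have h0 : vnorm (0 : 'rV[R]_r) <= C1 by rewrite vnorm0 ltW.
have := est v h0; rewrite addr0.
have [kap0 _] := kap_prop.
have [_ hbeta] := beta_facts.
rewrite big1; last by move=> j _; rewrite dp0r mulr0 mul0r.
under eq_bigr => j _ do rewrite dp0r expr0n /= add0r.
move=> h; apply: le_trans h _.
rewrite /Lv subr0.
have k2 : kap * (\sum_(j < p) w j * e j ^+ 2 * `|dp (aj j) v|) <= kap * (beta1 om Thetas As A i * vnorm v) by rewrite ler_wpM2l.
rewrite mulrDl; lra.
Qed.

Lemma sphere d : 0 < sigma_r (I1 b2 om Thetas As A i) -> vnorm d <= C1 ->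
  dp (sv (ts + d)) d <= vnorm d * (Lv - sigma_r (I1 b2 om Thetas As A i) * vnorm d
     + kap * gamma1 om A i * vnorm d ^+ 2).
Proof.
move=> s0 hd.
have [kap0 _] := kap_prop.
have [_ hbeta] := beta_facts.
have [_ hgam] := gamma_facts.
have hray : sigma_r (I1 b2 om Thetas As A i) * sq d <= \sum_(j < p) cc j * dp (aj j) d ^+ 2 := @rayleigh R r p cc aj cc_ge0 s0 d.
apply: le_trans (est d hd) _.
set sig := sigma_r (I1 b2 om Thetas As A i).
have e1 : \sum_(j < p) cc j * dp (aj j) d * dp (aj j) d = \sum_(j < p) cc j * dp (aj j) d ^+ 2.
  by apply: eq_bigr => j _; rewrite expr2 mulrA.
have e2 : \sum_(j < p) w j * (dp (aj j) d ^+ 2 + e j ^+ 2) * `|dp (aj j) d| =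
    \sum_(j < p) w j * `|dp (aj j) d| ^+ 3 + \sum_(j < p) w j * e j ^+ 2 * `|dp (aj j) d|.
  rewrite -big_split; apply: eq_bigr => j _ /=.
  rewrite -[dp (aj j) d ^+ 2]real_normK ?num_real //; ring.
rewrite e1 e2.
have := hbeta d; have := hgam d.
rewrite -vnorm_sq in hray.
set S1' := \sum_(j < p) w j * `|dp (aj j) d| ^+ 3.
set S2' := \sum_(j < p) w j * e j ^+ 2 * `|dp (aj j) d|.
set S3' := \sum_(j < p) cc j * dp (aj j) d ^+ 2.
rewrite /sig in hray *.
move=> g1 b1'.
have k1 : kap * S1' <= kap * (gamma1 om A i * vnorm d ^+ 3) by rewrite ler_wpM2l.
have k2 : kap * S2' <= kap * (beta1 om Thetas As A i * vnorm d) by rewrite ler_wpM2l.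
have ee : vnorm d * (Lv - sigma_r (I1 b2 om Thetas As A i) * vnorm d + kap * gamma1 om A i * vnorm d ^+ 2) =
  (vnorm (ZOA b1 y om Thetas As A i) + vnorm (B1 b2 om Thetas As A i)) * vnorm d
  - sigma_r (I1 b2 om Thetas As A i) * vnorm d ^+ 2
  + kap * (gamma1 om A i * vnorm d ^+ 3) + kap * (beta1 om Thetas As A i * vnorm d).
  by rewrite /Lv; ring.
rewrite ee mulrDr.
have h3 : - S3' <= - (sigma_r (I1 b2 om Thetas As A i) * vnorm d ^+ 2) by rewrite lerN2; exact: hray.
lra.
Qed.

Definition ell (th : 'rV[R]_r) : R :=
  \sum_(j < p) w j * (y i j * dp (aj j) th - b (dp (aj j) th)).

Lemma ell_cont : continuous ell.
Proof.
apply: cont_sum => j; apply: cont_mul; first exact: cont_cst.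
apply: cont_add; first by apply: cont_mul; [exact: cont_cst| exact: cont_dp].
apply: cont_opp => x; apply: continuous_comp; first exact: cont_dp.
exact: (@deriv_cont R b b1 hb).
Qed.

Lemma dir (th v : 'rV[R]_r) :
  (exists t1, 0 < t1 /\ forall t, 0 < t -> t <= t1 -> ell (th + t *: v) <= ell th) ->
  dp (sv th) v <= 0.
Proof.
move=> [t1 [t10 ht1]].
rewrite leNgt; apply/negP => D0.
set D := dp (sv th) v in D0.
pose x j := dp (aj j) th.
pose h j := dp (aj j) v.
pose al := \sum_(j < p) (`|x j| + `|h j|).
have [K2 [K20 hK2]] := cont_bounded al (deriv_cont hb2).
pose E := K2 / 2 * \sum_(j < p) w j * h j ^+ 2.
have E0 : 0 <= E.
  rewrite /E mulr_ge0 ?divr_ge0 //; apply: sumr_ge0 => j _.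
  by rewrite mulr_ge0 ?w_ge0 ?sqr_ge0.
pose t := Num.min t1 (Num.min 1 (D / (E + 1))).
have t0 : 0 < t by rewrite /t !lt_min t10 ltr01 /= divr_gt0 //; lra.
have tt1 : t <= t1 by rewrite /t ge_min lexx.
have tle1 : t <= 1 by rewrite /t !ge_min lexx orbT.
have tD : t <= D / (E + 1) by rewrite /t !ge_min lexx !orbT.
have hDt : t * E < D.
  have : t * (E + 1) <= D by rewrite -ler_pdivlMr //; lra.
  nra.
have key : t * D - t ^+ 2 * E <= ell (th + t *: v) - ell th.
  rewrite /ell -sumrB /D /sv dp_suml /E mulr_sumr mulr_sumr mulr_sumr -sumrB.
  apply: ler_sum => j _.
  have hxj : `|x j| + `|h j| <= al.
    by apply: (@le_sum_term R p (fun k => `|x k| + `|h k|) j) => k; rewrite addr_ge0.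
  have ax : `|x j| <= al by have := normr_ge0 (h j); lra.
  have ax2 : `|x j + t * h j| <= al.
    apply: le_trans (ler_normD _ _) _; rewrite normrM (ger0_norm (ltW t0)).
    have : t * `|h j| <= `|h j| by rewrite ler_piMl ?normr_ge0.
    lra.
  have tay := taylor2 hb hb1 hK2 ax2 ax.
  have e1 : x j + t * h j - x j = t * h j by ring.
  rewrite e1 in tay.
  have dpe : dp (aj j) (th + t *: v) = x j + t * h j by rewrite dpDr dpZr.
  rewrite dpe -/(x j) -/(h j).
  set B := b (x j + t * h j) - b (x j) - b1 (x j) * (t * h j) in tay.
  have hB : B <= K2 / 2 * (t * h j) ^+ 2 := le_trans (ler_norm _) tay.
  have ide : w j * (y i j * (x j + t * h j) - b (x j + t * h j)) - w j * (y i j * x j - b (x j))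
     - (t * (w j * (y i j - b1 (x j)) * h j) - t ^+ 2 * (K2 / 2 * (w j * h j ^+ 2)))
     = w j * (K2 / 2 * (t * h j) ^+ 2 - B) by rewrite /B; ring.
  rewrite -subr_ge0 ide mulr_ge0 ?w_ge0 // subr_ge0 //.
have := ht1 t t0 tt1.
have : 0 < t * D - t ^+ 2 * E.
  rewrite expr2 -mulrA -mulrBr mulr_gt0 //; lra.
lra.
Qed.

Lemma sqDZ (d v : 'rV[R]_r) t : sq (d + t *: v) = sq d + 2 * t * dp d v + t ^+ 2 * sq v.
Proof. rewrite /sq !dpDl !dpDr !dpZl !dpZr (dpC v d); ring. Qed.

Lemma vnorm_le_sq (d : 'rV[R]_r) rho : 0 <= rho -> sq d <= rho ^+ 2 -> vnorm d <= rho.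
Proof.
move=> r0 h; rewrite -(@ler_pXn2r _ 2) // ?nnegrE ?vnorm_ge0 //.
by rewrite vnorm_sq.
Qed.

Lemma main_ex : 0 < phi -> 0 < sigma_r (I1 b2 om Thetas As A i) ->
  (gamma1 om A i * kap != 0 ->
     Lv <= sigma_r (I1 b2 om Thetas As A i) ^+ 2 / (4 * gamma1 om A i * kap)) ->
  Lv <= 2^-1 * sigma_r (I1 b2 om Thetas As A i) * C1 ->
  exists th : 'rV[R]_r, S1 phi b1 y om i th A = 0 /\
    vnorm (th - ts) <= 2 * (sigma_r (I1 b2 om Thetas As A i))^-1 * Lv /\
    vnorm (th - ts) <= C1.
Proof.
move=> phi0 s0 hg hC.
set sig := sigma_r (I1 b2 om Thetas As A i).
have [kap0 _] := kap_prop.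
have [beta0 _] := beta_facts.
have [gam0 _] := gamma_facts.
have L0 : 0 <= Lv by rewrite /Lv !addr_ge0 ?vnorm_ge0 ?mulr_ge0.
have [Lz|Lpos] := eqVneq Lv 0.
  exists ts; rewrite subrr vnorm0 Lz mulr0 lexx ltW //; split => //.
  rewrite S1_E.
  have -> : sv ts = 0.
    apply: sq_le0; have := zero_est (sv ts); rewrite Lz mul0r //.
  by rewrite scaler0.
have Lp : 0 < Lv by rewrite lt_def Lpos L0.
pose rho := 2 * sig^-1 * Lv.
have rho0 : 0 < rho by rewrite /rho !mulr_gt0 ?invr_gt0.
have rs : rho * sig = 2 * Lv by rewrite /rho; field; apply: lt0r_neq0.
have rC : rho <= C1.
  have : rho * sig <= C1 * sig by rewrite rs; move: hC; rewrite -/sig; nra.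
  by rewrite ler_pM2r.
pose K := [set th : 'rV[R]_r | sq (th - ts) <= rho ^+ 2].
have neK : K !=set0 by exists ts; rewrite /K /= subrr /sq dp0r sqr_ge0.
have [th0 th0K th0max] := EVT_max_rV neK (@ball_compact R r ts rho)
    (continuous_subspaceT ell_cont).
set d0 := th0 - ts.
have hd0 : sq d0 <= rho ^+ 2 by move: th0K; rewrite inE.
have vd0 : vnorm d0 <= rho by apply: vnorm_le_sq; rewrite // ltW.
have allowed v : (sq d0 < rho ^+ 2) \/ (dp d0 v < 0) -> dp (sv th0) v <= 0.
  move=> hv; apply: dir.
  have hc0 : 0 <= rho ^+ 2 - sq d0 by rewrite subr_ge0.
  have hc1 : 0 < rho ^+ 2 - sq d0 \/ 2 * dp d0 v < 0.
    by case: hv => h; [left; rewrite subr_gt0| right; lra].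
  have [t1 [t10 ht1]] := @smallt R (2 * dp d0 v) (sq v) (rho ^+ 2 - sq d0) (sq_ge0 v) hc0 hc1.
  exists t1; split => // t t0 tt1; apply: th0max; rewrite inE /K /=.
  have -> : th0 + t *: v - ts = d0 + t *: v by rewrite /d0 addrAC.
  rewrite sqDZ; have := ht1 t t0 tt1; lra.
have sv0 : sv th0 = 0.
  have [lt|ge] := ltP (sq d0) (rho ^+ 2).
    by apply: sq_le0; apply: allowed; left.
  have eq2 : sq d0 = rho ^+ 2 by apply/eqP; rewrite eq_le hd0 ge.
  have vd : vnorm d0 = rho by rewrite vnormE eq2 sqrtr_sqr ger0_norm // ltW.
  have sph := sphere s0 (le_trans vd0 rC).
  have etd : ts + d0 = th0 by rewrite /d0 addrC subrK.
  rewrite etd in sph.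
  rewrite vd -/sig in sph.
  have alg : Lv - sig * rho + kap * gamma1 om A i * rho ^+ 2 <= 0.
    have [gz|gnz] := eqVneq (gamma1 om A i * kap) 0.
      have -> : kap * gamma1 om A i = 0 by rewrite mulrC.
      rewrite mul0r addr0 mulrC rs; lra.
    have := hg gnz => hL.
    have gk : 0 < gamma1 om A i * kap by rewrite lt_def gnz mulr_ge0.
    have h4 : Lv * (4 * (gamma1 om A i * kap)) <= sig ^+ 2.
      have e4 : 4 * (gamma1 om A i * kap) = 4 * gamma1 om A i * kap by rewrite mulrA.
      have X0 : 0 < 4 * gamma1 om A i * kap by rewrite -mulrA mulr_gt0.
      have := ler_wpM2r (ltW X0) hL; rewrite divfK ?gt_eqF // => h4'.
      by rewrite e4.
    have : kap * gamma1 om A i * rho ^+ 2 * sig ^+ 2 <= Lv * sig ^+ 2.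
      have ee : kap * gamma1 om A i * rho ^+ 2 * sig ^+ 2 =
         Lv * (4 * (gamma1 om A i * kap)) * Lv.
        have -> : kap * gamma1 om A i * rho ^+ 2 * sig ^+ 2 =
           kap * gamma1 om A i * (rho * sig) ^+ 2 by ring.
        rewrite rs; ring.
      rewrite ee; rewrite [X in _ <= X]mulrC ler_wpM2r // ltW //.
    rewrite ler_pM2r ?exprn_gt0 // => h5.
    rewrite mulrC rs; lra.
  have hs0 : dp (sv th0) d0 <= 0.
    apply: le_trans sph _; rewrite -[X in _ <= X](mulr0 rho) ler_wpM2l // ltW //.
  have hn : dp d0 (- d0) < 0 by rewrite dpNr -/(sq d0) eq2 oppr_lt0 exprn_gt0.
  have h1 := allowed (- d0) (or_intror hn).
  rewrite dpNr oppr_le0 in h1.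
  have h2 := allowed (sv th0 - d0).
  have : dp d0 (sv th0 - d0) < 0.
    rewrite dpBr -/(sq d0) eq2 dpC.
    have : 0 < rho ^+ 2 by rewrite exprn_gt0.
    lra.
  move=> /(fun h => h2 (or_intror h)); rewrite dpBr => h3.
  apply: sq_le0; rewrite /sq; lra.
exists th0; split; first by rewrite S1_E sv0 scaler0.
by split => //; apply: le_trans vd0 rC.
Qed.

End Main.

Unset Implicit Arguments.

Theorem mainTheorem10 (R : realType) (n p r : nat) (phi : R)
  (b b1 b2 b3 : R -> R)
  (Thetas : 'M[R]_(n, r)) (As A : 'M[R]_(p, r)) (C1 C2 : R) (i : 'I_n)
  (y : 'M[R]_(n, p)) (om : 'I_n -> 'I_p -> bool) :
  0 < phi ->
  (forall x : R, is_derive x (1 : R) b (b1 x)) ->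
  (forall x : R, is_derive x (1 : R) b1 (b2 x)) ->
  (forall x : R, is_derive x (1 : R) b2 (b3 x)) ->
  continuous b3 ->
  (forall x, 0 < b2 x) ->
  0 < C1 -> 0 < C2 ->
  norm2inf Thetas <= C1 ->
  norm2inf As <= C2 ->
  norm2inf A <= C2 ->
  0 < sigma_r (I1 b2 om Thetas As A i) ->
  let sig := sigma_r (I1 b2 om Thetas As A i) in
  let k3 := kappa3 b3 (3 * C1 * C2) in
  let L := vnorm (ZOA b1 y om Thetas As A i) + vnorm (B1 b2 om Thetas As A i)
           + beta1 om Thetas As A i * k3 in
  (gamma1 om A i * k3 != 0 -> L <= sig ^+ 2 / (4 * gamma1 om A i * k3)) ->
  L <= 2^-1 * sig * C1 ->
  exists theta : 'rV[R]_r,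
    S1 phi b1 y om i theta A = 0 /\
    vnorm (theta - row i Thetas) <= 2 * sig^-1 * L /\
    vnorm (theta - row i Thetas) <= C1.
Proof.
move=> phi0 hb hb1 hb2 cb3 b2p C1p C2p nT nAs nA s0 sig k3 L hg hC.
by apply: main_ex.
Qed.
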